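(* Let $r_1,r_2,r_3$ be pairwise distinct integers with $r_1<0<r_3$ and $\gcd(r_1,r_2,r_3)=1$, and let $v_2\in\mathbb{N}\cup\{\infty\}$. Then $S_{(r_1,r_2,r_3)}^{(\infty,v_2,\infty)}=\mathbb{Z}$ if and only if (A) $S_{(r_1,r_3)}^{(\infty,\infty)}=\mathbb{Z}$, or (B) $r_2\notin S_{(r_1,r_3)}^{(\infty,\infty)}=\langle d'\rangle$, where $d'=\gcd(r_1,r_3)$, and $v_2\geq d'-1$ (with the convention $\infty\ge m$ for every integer $m$).
   Context: Let $L$ be an infinite-dimensional vector space over a field $F$ (of characteristic different from $2$) with basis $e_1,e_2,\dots$, and let $E$ be the Grassmann algebra of $L$: the unital associative algebra generated by $L$ subject to $e_ie_j=-e_je_i$; it has basis consisting of $1$ and the monomials $e_{i_1}\cdots e_{i_k}$ with $i_1<\dots<i_k$. Given pairwise distinct integers $r_1,\dots,r_n$ (lower indices) and $v_1,\dots,v_n\in\mathbb{N}\cup\{\infty\}$ (upper indices), split the basis $\{e_i\}$ into $n$ disjoint sets, the $j$-th of cardinality $v_j$ and spanning a subspace $L_{r_j}^{v_j}$, so $L=L_{r_1}^{v_1}\oplus\cdots\oplus L_{r_n}^{v_n}$. Declare $\|e_k\|=r_j$ iff $e_k\in L_{r_j}^{v_j}$, and $\|e_{k_1}\cdots e_{k_s}\|=\|e_{k_1}\|+\cdots+\|e_{k_s}\|$. This defines a $\mathbb{Z}$-grading $E_{(r_1,\dots,r_n)}^{(v_1,\dots,v_n)}=\bigoplus_{r\in\mathbb{Z}}A_r$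 on $E$ ($A_r$ spanned by the monomials of degree $r$), called an $n$-induced $\mathbb{Z}$-grading. Its support is $S_{(r_1,\dots,r_n)}^{(v_1,\dots,v_n)}=\{r\in\mathbb{Z}: A_r\neq 0\}$. For $d\in\mathbb{Z}$, $\langle d\rangle=d\mathbb{Z}$. *)

(* Defs.v *)
From mathcomp Require Import all_boot all_order all_algebra.
Set Implicit Arguments. Unset Strict Implicit. Unset Printing Implicit Defensive.
Import Order.TTheory GRing.Theory Num.Theory.
Local Open Scope ring_scope.

(* Upper indices live in N ∪ {∞}: [Some m] is the finite cardinal m,
   [None] is ∞. *)
Definition extnat := option nat.

Definition ge_ext (v : extnat) (m : int) : Prop :=
  match v with None => True | Some k => m <= k%:Z end.

(* The basis e_1, e_2, ... of L is indexed by nat (e_{k+1} <-> k).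
   A splitting of the basis into n disjoint sets, the j-th of cardinality
   v j, is a function [c : nat -> 'I_n] assigning to each basis vector the
   block it belongs to. *)
Definition block_card (n : nat) (c : nat -> 'I_n) (j : 'I_n) (v : extnat) : Prop :=
  match v with
  | Some m => exists s : seq nat, [/\ uniq s, size s = m & forall k, (c k == j) = (k \in s)]
  | None => forall N : nat, exists k : nat, (N <= k)%N /\ c k = j
  end.

Definition is_splitting (n : nat) (v : 'I_n -> extnat) (c : nat -> 'I_n) : Prop :=
  forall j, block_card c j (v j).

(* Monomials e_{k_1}...e_{k_s} (k_1<...<k_s), including 1 (s = 0), are
   encoded by duplicate-free lists of indices. *)
Definition mono_deg (n : nat) (r : 'I_n -> int) (c : nat -> 'I_n) (s : seq nat) : int :=
  \sum_(k <- s) r (c k).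

(* Support of the induced Z-grading: r \in S iff A_r <> 0 iff some basis
   monomial of E has degree r (A_r is spanned by the basis monomials of
   degree r, which are linearly independent). *)
Definition grading_support (n : nat) (r : 'I_n -> int) (c : nat -> 'I_n) : int -> Prop :=
  fun m => exists s : seq nat, uniq s /\ mono_deg r c s = m.

Definition vec3 {T} (a b d : T) : 'I_3 -> T :=
  fun j => match val j with 0%N => a | 1%N => b | _ => d end.
Definition vec2 {T} (a b : T) : 'I_2 -> T :=
  fun j => match val j with 0%N => a | _ => b end.

(* Main.v *)
Require Import Defs.
From mathcomp Require Import all_boot all_order all_algebra.
From mathcomp Require Import ring zify.
Import Order.TTheory GRing.Theory Num.Theory.
Set Implicit Arguments. Unset Strict Implicit.
Local Open Scope ring_scope.

Lemma inf_list n (c : nat -> 'I_n) j : block_card c j None ->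
  forall a, exists s, [/\ uniq s, size s = a & all (fun k => c k == j) s].
Proof.
move=> H; elim=> [|a [s [us ss as_]]]; first by exists [::].
have [k [Hk ck]] := H (sumn s).+1.
exists (k :: s); split => //=; last by rewrite ck eqxx.
  rewrite us andbT; apply/negP => ks.
  have : (k <= sumn s)%N.
    clear us ss as_ Hk; elim: s ks => //= x s IH; rewrite inE => /orP [/eqP->|/IH h].
      exact: leq_addr.
    exact: leq_trans h (leq_addl _ _).
  by rewrite leqNgt Hk.
by rewrite ss.
Qed.

Lemma deg_block n (r : 'I_n -> int) c j s : all (fun k => c k == j) s ->
  mono_deg r c s = (size s)%:Z * r j.
Proof.
elim: s => [|x s IH] /=; first by rewrite /mono_deg big_nil mul0r.
move=> /andP [/eqP cx /IH]; rewrite /mono_deg big_cons => ->.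
by rewrite cx -add1n PoszD mulrDl mul1r.
Qed.

Lemma mono_deg_cat n (r : 'I_n -> int) c s1 s2 :
  mono_deg r c (s1 ++ s2) = mono_deg r c s1 + mono_deg r c s2.
Proof. by rewrite /mono_deg big_cat. Qed.

Lemma uniq_cat_disj (s1 s2 : seq nat) (P : pred nat) :
  uniq s1 -> uniq s2 -> all P s1 -> all (predC P) s2 -> uniq (s1 ++ s2).
Proof.
move=> u1 u2 a1 a2; rewrite cat_uniq u1 u2 andbT /=.
apply/hasPn => x xs2; apply/negP => xs1.
by move/allP: a1 => /(_ x xs1); move/allP: a2 => /(_ x xs2) /= /negbTE ->.
Qed.

Lemma rep2 (r1 r3 m : int) : r1 < 0 -> 0 < r3 -> (gcdz r1 r3 %| m)%Z ->
  exists a c : nat, m = a%:Z * r1 + c%:Z * r3.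
Proof.
move=> h1 h3 /dvdzP [k ->].
have [u [w e]] := Bezoutz r1 r3.
pose t : nat := addn (absz (k*u)%R) (absz (k*w)%R).
exists (absz (k*u + t%:Z * r3)%R), (absz (k*w - t%:Z * r1)%R).
have -> : (absz (k*u + t%:Z * r3)%R : int) = k*u + t%:Z * r3.
  rewrite /t; nia.
have -> : (absz (k*w - t%:Z * r1)%R : int) = k*w - t%:Z * r1.
  rewrite /t; nia.
rewrite -e; ring.
Qed.

Lemma residue (d r2 m : int) : 0 < d -> coprimez d r2 ->
  exists b : nat, b%:Z < d /\ (d %| m - b%:Z * r2)%Z.
Proof.
move=> dp cop; have [u [w e]] := Bezoutz d r2.
move/eqP: cop => cop; rewrite cop in e.
have d0 : d != 0 by rewrite gt_eqF.
exists (absz ((m * w) %% d)%Z).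
have -> : (absz ((m * w) %% d)%Z : int) = ((m * w) %% d)%Z by rewrite gez0_abs ?modz_ge0.
split; first exact: ltz_pmod.
apply/dvdzP; exists (m * u + (m * w %/ d)%Z * r2).
have E := divz_eq (m * w) d.
move: E; set q := (m * w %/ d)%Z; set r := ((m * w) %% d)%Z => E.
have -> : r = m * w - q * d by rewrite E; ring.
have {1}-> : m = m * (u * d + w * r2) :> int by rewrite e mulr1.
clearbody q r; ring.
Qed.

Lemma S3dvd (r1 r2 r3 : int) (c3 : nat -> 'I_3) (d : int) :
  (d %| r1)%Z -> (d %| r3)%Z -> forall s,
  (d %| mono_deg (vec3 r1 r2 r3) c3 s - (count (fun k => val (c3 k) == 1%N) s)%:Z * r2)%Z.
Proof.
move=> d1 d3; elim=> [|x s IH]; first by rewrite /mono_deg big_nil mul0r subr0 dvdz0.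
rewrite /mono_deg big_cons /= PoszD.
have -> : vec3 r1 r2 r3 (c3 x) + \sum_(j <- s) vec3 r1 r2 r3 (c3 j) -
   ((val (c3 x) == 1%N)%:Z + (count (fun k => val (c3 k) == 1%N) s)%:Z) * r2 =
   (vec3 r1 r2 r3 (c3 x) - (val (c3 x) == 1%N)%:Z * r2) +
   (\sum_(j <- s) vec3 r1 r2 r3 (c3 j) - (count (fun k => val (c3 k) == 1%N) s)%:Z * r2).
  ring.
apply: rpredD => //.
by case: (c3 x) => [[|[|[|i]]] Hi] /=; rewrite ?mul0r ?subr0 ?mul1r ?subrr ?dvdz0.
Qed.

Definition j0 : 'I_3 := @Ordinal 3 0 isT.
Definition j1 : 'I_3 := @Ordinal 3 1 isT.
Definition j2 : 'I_3 := @Ordinal 3 2 isT.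
Definition k0 : 'I_2 := @Ordinal 2 0 isT.
Definition k1 : 'I_2 := @Ordinal 2 1 isT.

Lemma S2char (r1 r3 : int) (c2 : nat -> 'I_2) : r1 < 0 -> 0 < r3 ->
  is_splitting (vec2 None None) c2 ->
  forall m, grading_support (vec2 r1 r3) c2 m <-> (gcdz r1 r3 %| m)%Z.
Proof.
move=> h1 h3 sp m; split.
  move=> [s [_ <-]]; elim: s => [|x s IH]; first by rewrite /mono_deg big_nil dvdz0.
  rewrite /mono_deg big_cons; apply: rpredD => //.
  case: (c2 x) => [[|[|i]] Hi] //=; [exact: dvdz_gcdl | exact: dvdz_gcdr].
move=> dm; have [a [c ->]] := rep2 h1 h3 dm.
have [s1 [u1 z1 a1]] := inf_list (sp k0) a.
have [s3 [u3 z3 a3]] := inf_list (sp k1) c.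
exists (s1 ++ s3); split.
  apply: (uniq_cat_disj (P := fun k => c2 k == k0)) => //.
  by apply: sub_all a3 => x /= /eqP ->.
by rewrite mono_deg_cat (deg_block _ a1) (deg_block _ a3) z1 z3.
Qed.

Lemma S3all (r1 r2 r3 : int) (v2 : extnat) (c3 : nat -> 'I_3) :
  r1 < 0 -> 0 < r3 -> coprimez (gcdz r1 r3) r2 ->
  is_splitting (vec3 None v2 None) c3 -> ge_ext v2 (gcdz r1 r3 - 1) ->
  forall m, grading_support (vec3 r1 r2 r3) c3 m.
Proof.
move=> h1 h3 cop sp ge m.
have dp : 0 < gcdz r1 r3.
  rewrite lt_neqAle eq_sym gcdz_eq0 negb_and (gt_eqF h3) orbT /=.
  by rewrite /gcdz.
have [b [bd db]] := residue m dp cop.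
have [a [c ec]] := rep2 h1 h3 db.
have [s1 [u1 z1 a1]] := inf_list (sp j0) a.
have [s3 [u3 z3 a3]] := inf_list (sp j2) c.
have [s2 [u2 z2 a2]] : exists s, [/\ uniq s, size s = b & all (fun k => c3 k == j1) s].
  move: (sp j1) ge; rewrite /=; case: v2 {sp} => [m0|] /=.
    move=> [s0 [u0 z0 e0]] hm; exists (take b s0); split.
    - exact: take_uniq.
    - rewrite size_take z0; case: ifP => // /negbT; rewrite -leqNgt => hb.
      lia.
    - by apply/allP => x /mem_take xs; rewrite e0.
  by move=> H _; exact: inf_list H b.
exists (s1 ++ s2 ++ s3); split.
  apply: (uniq_cat_disj (P := fun k => c3 k == j0)) => //.
    apply: (uniq_cat_disj (P := fun k => c3 k == j1)) => //.
    by apply: sub_all a3 => x /= /eqP ->.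
  rewrite all_cat; apply/andP; split.
    by apply: sub_all a2 => x /= /eqP ->.
  by apply: sub_all a3 => x /= /eqP ->.
rewrite !mono_deg_cat (deg_block _ a1) (deg_block _ a2) (deg_block _ a3) z1 z2 z3 /=.
have -> : m = (m - b%:Z * r2) + b%:Z * r2 by ring.
rewrite ec; ring.
Qed.

Theorem theorem3p4 (r1 r2 r3 : int) (v2 : extnat)
  (c3 : nat -> 'I_3) (c2 : nat -> 'I_2) :
  r1 != r2 -> r1 != r3 -> r2 != r3 ->
  r1 < 0 -> 0 < r3 ->
  gcdz (gcdz r1 r2) r3 = 1 ->
  is_splitting (vec3 None v2 None) c3 ->
  is_splitting (vec2 None None) c2 ->
  ((forall m : int, grading_support (vec3 r1 r2 r3) c3 m) <->
   ((forall m : int, grading_support (vec2 r1 r3) c2 m) \/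
    (~ grading_support (vec2 r1 r3) c2 r2 /\
     (forall m : int, grading_support (vec2 r1 r3) c2 m <-> (gcdz r1 r3 %| m)%Z) /\
     ge_ext v2 (gcdz r1 r3 - 1)))).
Proof.
move=> _ _ _ h1 h3 g sp3 sp2.
have cop : coprimez (gcdz r1 r3) r2 by rewrite /coprimez gcdzAC g.
have S2 := S2char h1 h3 sp2.
have dp : 0 < gcdz r1 r3.
  rewrite lt_neqAle eq_sym gcdz_eq0 negb_and (gt_eqF h3) orbT /=.
  by rewrite /gcdz.
have d1 : (gcdz r1 r3 %| 1)%Z -> gcdz r1 r3 = 1.
  by rewrite dvdzE /= dvdn1 /gcdz => /eqP ->.
split.
  move=> H; case: (boolP (gcdz r1 r3 == 1)) => [/eqP d1'|dn1].
    by left => m; apply/S2; rewrite d1' dvdzE dvd1n.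
  right; split; [|split => //].
    move/S2 => dr2; apply: (negP dn1); apply/eqP; apply: d1.
    have := dvdz_gcd (gcdz r1 r3) (gcdz r1 r3) r2.
    by rewrite dvdzz dr2 (eqP cop) => ->.
  case E: v2 => [m0|] //=.
  apply/negPn/negP; rewrite -ltNge => lt.
  have [s [us ds]] := H ((m0.+1)%:Z * r2).
  have := S3dvd r2 c3 (dvdz_gcdl r1 r3) (dvdz_gcdr r1 r3) s; rewrite ds.
  set b := count _ s.
  have bm : (b <= m0)%N.
    move: (sp3 j1); rewrite /= E => -[s0 [u0 z0 e0]].
    rewrite /b -size_filter -z0; apply: uniq_leq_size; first exact: filter_uniq.
    move=> x; rewrite mem_filter => /andP [cx _]; rewrite -e0.
    by rewrite -val_eqE.
  have -> : (m0.+1)%:Z * r2 - b%:Z * r2 = ((m0.+1)%:Z - b%:Z) * r2 by ring.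
  rewrite Gauss_dvdzl // => /dvdzP [q eq].
  move: eq lt dp; move: (gcdz r1 r3) => D eq lt dp.
  have [qle|qgt] := lerP q 0; nia.
case => [HA | [nr2 [_ ge]]].
  have dd : gcdz r1 r3 = 1 by apply: d1; apply/S2; apply: HA.
  apply: S3all => //; rewrite dd subrr; case: v2 {sp3} => //=.
exact: S3all.
Qed.
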